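(* Let $\mathcal{L}$ be a distributive abstract logic and $a,b\in Expr_{\mathcal{L}}$. Then ($a\le b$ and $b\le a$) holds if and only if ($a\Vdash_{\mathcal{L}} b$ and $b\Vdash_{\mathcal{L}} a$).
   Context: An abstract logic is a triple $\mathcal{L}=(Expr_{\mathcal{L}},Th_{\mathcal{L}},\mathcal{C}_{\mathcal{L}})$ where $Expr_{\mathcal{L}}$ is a set, $Th_{\mathcal{L}}$ a non-empty set of subsets of $Expr_{\mathcal{L}}$ (theories) closed under intersections of non-empty subfamilies, and $\mathcal{C}_{\mathcal{L}}$ a set of operations on $Expr_{\mathcal{L}}$. $\mathcal{L}$ is closed under union of chains if the union of every non-empty chain of theories is a theory. A theory $T$ is prime if $T=\bigcap\mathcal{T}$ with $\mathcal{T}\subseteq Th_{\mathcal{L}}$ non-empty finite implies $T\in\mathcal{T}$; totally prime if this holds for non-empty $\mathcal{T}$ of any size. $PTh_{\mathcal{L}}$, $TPTh_{\mathcal{L}}$ denote these sets. A distributive abstract logic is one closed under union of chains with binary connectives $\vee,\wedge$ such that for all $a,b$ and all $T\in TPTh_{\mathcal{L}}$: $a\vee b\in T$ iff $a\in T$ or $b\in T$; $a\wedge b\in T$ iff $a,b\in T$. The consequence relation: for $A\cup\{a\}\subseteq Expr_{\mathcal{L}}$, $A\Vdash_{\mathcal{L}} a$ iff $a\in\bigcap\{T\in Th_{\mathcal{L}}: A\subseteq T\}$ (write $b\Vdash_{\mathcal{L}}a$ for $\{b\}\Vdash_{\mathcal{L}}a$). The order: $a\le b$ iff $S_a\subseteq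 S_b$, where $S_a=\{P\in PTh_{\mathcal{L}}: a\in P\}$. *)

(* Defs.v *)
From Stdlib Require Import List.
From Stdlib Require Vectors.Fin.

Set Implicit Arguments.

Definition bigcap (E : Type) (F : (E -> Prop) -> Prop) : E -> Prop :=
  fun x => forall T, F T -> T x.

Definition bigcup (E : Type) (F : (E -> Prop) -> Prop) : E -> Prop :=
  fun x => exists T, F T /\ T x.

Definition subset (E : Type) (A B : E -> Prop) : Prop := forall x, A x -> B x.

Definition operation (E : Type) := { n : nat & (Fin.t n -> E) -> E }.

Definition binop_as_operation (E : Type) (f : E -> E -> E) : operation E :=
  existT (fun n => (Fin.t n -> E) -> E) 2
    (fun v => f (v Fin.F1) (v (Fin.FS Fin.F1))).

Record abstract_logic := {
  Expr : Type;
  Th : (Expr -> Prop) -> Prop;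
  Conn : operation Expr -> Prop;
  Th_nonempty : exists T, Th T;
  Th_closed_bigcap : forall F : (Expr -> Prop) -> Prop,
      (exists T, F T) -> (forall T, F T -> Th T) -> Th (bigcap F)
}.

Definition finite_family (E : Type) (F : (E -> Prop) -> Prop) : Prop :=
  exists l : list (E -> Prop), forall T, F T <-> In T l.

Definition prime_theory (L : abstract_logic) (T : Expr L -> Prop) : Prop :=
  Th L T /\
  forall F : (Expr L -> Prop) -> Prop,
    (exists U, F U) -> finite_family F -> (forall U, F U -> Th L U) ->
    T = bigcap F -> F T.

Definition totally_prime_theory (L : abstract_logic) (T : Expr L -> Prop) : Prop :=
  Th L T /\
  forall F : (Expr L -> Prop) -> Prop,
    (exists U, F U) -> (forall U, F U -> Th L U) ->
    T = bigcap F -> F T.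

Definition is_chain (E : Type) (F : (E -> Prop) -> Prop) : Prop :=
  forall A B, F A -> F B -> subset A B \/ subset B A.

Definition closed_under_union_of_chains (L : abstract_logic) : Prop :=
  forall F : (Expr L -> Prop) -> Prop,
    (exists U, F U) -> (forall U, F U -> Th L U) -> is_chain F ->
    Th L (bigcup F).

Definition distributive (L : abstract_logic) (vee wedge : Expr L -> Expr L -> Expr L) : Prop :=
  closed_under_union_of_chains L /\
  Conn L (binop_as_operation vee) /\ Conn L (binop_as_operation wedge) /\
  (forall (a b : Expr L) T, totally_prime_theory L T ->
     (T (vee a b) <-> T a \/ T b) /\ (T (wedge a b) <-> T a /\ T b)).

Definition entails (L : abstract_logic) (A : Expr L -> Prop) (a : Expr L) : Prop :=
  bigcap (fun T => Th L T /\ subset A T) a.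

Definition entails1 (L : abstract_logic) (b a : Expr L) : Prop :=
  entails L (fun x => x = b) a.

Definition S_of (L : abstract_logic) (a : Expr L) : (Expr L -> Prop) -> Prop :=
  fun P => prime_theory L P /\ P a.

Definition le_expr (L : abstract_logic) (a b : Expr L) : Prop :=
  subset (S_of L a) (S_of L b).

(* Main.v *)
Require Import Defs.
From Stdlib Require Import Classical.
From mathcomp Require Import all_boot classical_sets.

Lemma maxthy (L : abstract_logic) (HC : closed_under_union_of_chains L)
  (T : Expr L -> Prop) (b : Expr L) :
  Th L T -> ~ T b -> (exists x, T x) ->
  exists M, Th L M /\ Defs.subset T M /\ ~ M b /\
   forall N, Th L N -> Defs.subset M N -> ~ N b -> N = M.
Proof.
intros HT Hb [x0 Hx0].
pose P := fun X : Expr L -> Prop => X = set0 \/ (Th L X /\ Defs.subset T X /\ ~ X b).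
destruct (@Zorn_bigcup (Expr L) P) as [A [PA Amax]].
- intros F FP Ftot.
  destruct (classic (exists U, F U /\ U <> set0)) as [[U [FU Une]]|Hno].
  + right.
    pose F' := fun X => F X /\ X <> set0.
    assert (E : (\bigcup_(X in F) X)%classic = Defs.bigcup F').
    { apply/seteqP; split.
      - intros y [X FX Xy]. exists X. split; [split; [exact FX|] | exact Xy].
        intro E; rewrite E in Xy; exact Xy.
      - intros y [X [[FX _] Xy]]. exists X; assumption. }
    rewrite E.
    assert (good : forall X, F' X -> Th L X /\ Defs.subset T X /\ ~ X b).
    { intros X [FX Xne]. destruct (FP X FX) as [|H]; [contradiction|exact H]. }
    split; [|split].
    * apply HC. exists U; split; assumption.
      intros X HX; apply (good X HX).
      intros X Y [FX _] [FY _]. destruct (Ftot X Y FX FY); [left|right]; assumption.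
    * intros y Ty. exists U. split; [split; assumption|]. apply (good U); [split; assumption|exact Ty].
    * intros [X [HX Xb]]. apply (good X HX). exact Xb.
  + left. apply/seteqP; split.
    * intros y [X FX Xy]. apply Hno. exists X; split; [exact FX|].
      intro E; rewrite E in Xy; exact Xy.
    * intros y [].
- assert (Agood : Th L A /\ Defs.subset T A /\ ~ A b).
  { destruct PA as [E|H]; [|exact H].
    exfalso. apply (Amax T).
    - rewrite E. split; [intros y []|]. intro H; exact (H x0 Hx0).
    - right. split; [exact HT|split; [intros y Hy; exact Hy|exact Hb]]. }
  destruct Agood as [ThA [TA Ab]].
  exists A. split; [exact ThA|split; [exact TA|split; [exact Ab|]]].
  intros N ThN AN Nb. apply NNPP; intro NE.
  apply (Amax N).
  + split; [exact AN|]. intro NA. apply NE. apply/seteqP; split; assumption.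
  + right. split; [exact ThN|split; [|exact Nb]].
    intros y Ty; apply AN, TA, Ty.
Qed.

Theorem lemma3p10 (L : abstract_logic) (vee wedge : Expr L -> Expr L -> Expr L)
  (HL : distributive L vee wedge) (a b : Expr L) :
  (le_expr L a b /\ le_expr L b a) <-> (entails1 L a b /\ entails1 L b a).
Proof.
destruct HL as [HC _].
assert (key : forall x y, le_expr L x y -> entails1 L x y).
{ intros x y Hle T [ThT Tx].
  apply NNPP; intro Ty.
  destruct (@maxthy L HC T y ThT Ty) as [M [ThM [TM [My Mmax]]]].
  { exists x. apply Tx. reflexivity. }
  assert (PM : prime_theory L M).
  { split; [exact ThM|].
    intros F _ _ FTh E. apply NNPP; intro FM.
    apply My. rewrite E. intros U FU.
    apply NNPP; intro Uy.
    assert (MU : Defs.subset M U). { intros z Mz. rewrite E in Mz. apply Mz, FU. }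
    pose proof (Mmax U (FTh U FU) MU Uy) as EU. subst U. contradiction. }
  destruct (Hle M (conj PM (TM x (Tx x (erefl x))))) as [_ HMy]. contradiction. }
assert (key2 : forall x y, entails1 L x y -> le_expr L x y).
{ intros x y He P [[ThP HP] Px]. split; [split; assumption|].
  apply He. split; [exact ThP|]. intros z ->; exact Px. }
split; intros [H1 H2]; split; [apply key|apply key|apply key2|apply key2]; assumption.
Qed.
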